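(* Let $\mathrm{M}$ be the 2-space group $\ast632$ (IT number 17, $p6m$), so that $E^2/\mathrm{M}$ is a $30^\circ$–$60^\circ$ right triangle. Then $\mathrm{Sym}(\mathrm{M})=\mathrm{Aff}(\mathrm{M})=\{\mathrm{idt.}\}$, and $\Omega:\mathrm{Aff}(\mathrm{M})\to\mathrm{Out}(\mathrm{M})$ is an isomorphism.
   Context: A 2-space group is a discrete group of isometries of $E^2$ with compact quotient. Affine maps of $E^2$ are written $a+A$ ($x\mapsto a+Ax$). For a 2-space group $\mathrm{M}$, let $N_A(\mathrm{M})$ be its normalizer in the affine group of $E^2$; each $a+A\in N_A(\mathrm{M})$ induces an affinity $(a+A)_\star:\mathrm{M}x\mapsto\mathrm{M}(a+Ax)$ of the flat orbifold $E^2/\mathrm{M}$. $\mathrm{Aff}(\mathrm{M})$ is the group of all such affinities and $\mathrm{Sym}(\mathrm{M})=\mathrm{Isom}(E^2/\mathrm{M})$ its subgroup of isometries; idt. is the identity. $\Omega:\mathrm{Aff}(\mathrm{M})\to\mathrm{Out}(\mathrm{M})$ sends $(a+A)_\star$ to the outer automorphism class of $g\mapsto(a+A)g(a+A)^{-1}$ on $\mathrm{M}$. *)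

(* Defs.v *)
From HB Require Import structures.
From mathcomp Require Import all_boot all_order all_algebra.
From mathcomp Require Import reals.
Set Implicit Arguments. Unset Strict Implicit. Unset Printing Implicit Defensive.
Import Order.TTheory GRing.Theory Num.Theory.
Local Open Scope ring_scope.

Section Wallpaper.
Variable R : realType.

Definition pt := 'cV[R]_2.

Definition affmap := (pt * 'M[R]_2)%type.
Definition app (f : affmap) (x : pt) : pt := f.1 + f.2 *m x.
Definition is_affine (f : affmap) : Prop := f.2 \in unitmx.
Definition is_isometry (f : affmap) : Prop := f.2^T *m f.2 = 1%:M.
Definition acomp (f g : affmap) : affmap := (f.1 + f.2 *m g.1, f.2 *m g.2).
Definition ainv (f : affmap) : affmap := (- (invmx f.2 *m f.1), invmx f.2).
Definition aid : affmap := (0, 1%:M).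
Definition conj (f g : affmap) : affmap := acomp (acomp f g) (ainv f).

Definition mx2 (a b c d : R) : 'M[R]_2 :=
  \matrix_(i < 2, j < 2)
     if (i == 0 :> nat) then (if (j == 0 :> nat) then a else b)
     else (if (j == 0 :> nat) then c else d).
Definition vec2 (a b : R) : pt := \col_(i < 2) if (i == 0 :> nat) then a else b.

Definition s3 : R := Num.sqrt 3.
Definition rot60 : 'M[R]_2 := mx2 (1/2) (- (s3 / 2)) (s3 / 2) (1/2).
Definition refl : 'M[R]_2 := mx2 1 0 0 (-1).
Definition in_D6 (A : 'M[R]_2) : Prop :=
  exists k : 'I_6, A = rot60 ^+ k \/ A = rot60 ^+ k *m refl.
Definition in_lattice (a : pt) : Prop :=
  exists m n : int, a = m%:~R *: vec2 1 0 + n%:~R *: vec2 (1/2) (s3 / 2).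

(* The 2-space group *632 = p6m (IT 17): lattice translations composed with
   the point group D6 fixing the origin (a 6-fold rotation centre). *)
Definition p6m (g : affmap) : Prop := in_lattice g.1 /\ in_D6 g.2.

Definition in_NA (M : affmap -> Prop) (f : affmap) : Prop :=
  is_affine f /\ forall g, M g <-> M (conj f g).

Definition orbit (M : affmap -> Prop) (x : pt) : pt -> Prop :=
  fun y => exists g, M g /\ y = app g x.
Definition orbifold (M : affmap -> Prop) :=
  {O : pt -> Prop | exists x, O = orbit M x}.
Definition cls (M : affmap -> Prop) (x : pt) : orbifold M :=
  exist _ (orbit M x) (ex_intro _ x erefl).

Definition induces (M : affmap -> Prop) (f : affmap) (F : orbifold M -> orbifold M)
  : Prop := forall x, F (cls M x) = cls M (app f x).

(* Aff(M) and Sym(M) = Isom(E^2/M) (the affinities induced by isometries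
   in the normalizer) as sets of self-maps of the orbifold *)
Definition Aff (M : affmap -> Prop) (F : orbifold M -> orbifold M) : Prop :=
  exists f, in_NA M f /\ induces f F.
Definition Sym (M : affmap -> Prop) (F : orbifold M -> orbifold M) : Prop :=
  exists f, in_NA M f /\ is_isometry f /\ induces f F.

Definition is_aut (M : affmap -> Prop) (phi : affmap -> affmap) : Prop :=
  (forall g, M g -> M (phi g)) /\
  (forall g h, M g -> M h -> phi g = phi h -> g = h) /\
  (forall h, M h -> exists g, M g /\ phi g = h) /\
  (forall g h, M g -> M h -> phi (acomp g h) = acomp (phi g) (phi h)).
Definition out_eq (M : affmap -> Prop) (phi psi : affmap -> affmap) : Prop :=
  exists h, M h /\ forall g, M g -> phi g = conj h (psi g).

End Wallpaper.
Arguments Aff {R} M F.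
Arguments Sym {R} M F.
Arguments in_NA {R} M f.
Arguments is_aut {R} M phi.
Arguments out_eq {R} M phi psi.

(* Main.v *)
Require Import Defs.
From HB Require Import structures.
From mathcomp Require Import all_boot all_order all_algebra.
From mathcomp Require Import reals.
From mathcomp Require Import zify ring lra.
From Stdlib Require Import ProofIrrelevance FunctionalExtensionality PropExtensionality ClassicalEpsilon.
Import Order.TTheory GRing.Theory Num.Theory.
Local Open Scope ring_scope.
Set Implicit Arguments. Unset Strict Implicit. Unset Printing Implicit Defensive.
Ltac pairs := repeat match goal with |- (_, _) = (_, _) => congr pair end.
Definition V := (int * int)%type.
Definition M2 := (int * int * int * int)%type.
Definition vadd (v w : V) : V := (v.1 + w.1, v.2 + w.2).
Definition mv (A : M2) (v : V) : V :=
  let '(a,b,c,d) := A in (a * v.1 + b * v.2, c * v.1 + d * v.2).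
Definition mm (A B : M2) : M2 :=
  let '(a,b,c,d) := A in let '(a',b',c',d') := B in
  (a*a' + b*c', a*b' + b*d', c*a' + d*c', c*b' + d*d').
Definition I2 : M2 := (1,0,0,1).
Definition rZ : M2 := (0,-1,1,1).
Definition sZ : M2 := (1,1,0,-1).
Definition D6list : seq M2 := [:: (1,0,0,1); (0,-1,1,1); (-1,-1,1,0); (-1,0,0,-1); (0,1,-1,-1); (1,1,-1,0);
 (1,1,0,-1); (0,1,1,0); (-1,0,1,1); (-1,-1,0,1); (0,-1,-1,0); (1,0,-1,-1)].
Definition G := (V * M2)%type.
Definition mul (x y : G) : G := (vadd x.1 (mv x.2 y.1), mm x.2 y.2).
Definition one : G := ((0,0), I2).
Definition inG (x : G) := x.2 \in D6list.

Lemma D6_elim (P : M2 -> Prop) :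
  P (1,0,0,1) -> P (0,-1,1,1) -> P (-1,-1,1,0) -> P (-1,0,0,-1) -> P (0,1,-1,-1) -> P (1,1,-1,0) ->
  P (1,1,0,-1) -> P (0,1,1,0) -> P (-1,0,1,1) -> P (-1,-1,0,1) -> P (0,-1,-1,0) -> P (1,0,-1,-1) ->
  forall A, A \in D6list -> P A.
Proof.
move=> H1 H2 H3 H4 H5 H6 H7 H8 H9 H10 H11 H12 A.
rewrite !inE.
by do 11 (case/orP; [by move/eqP->|]); move/eqP->.
Qed.

Lemma D6_mul A B : A \in D6list -> B \in D6list -> mm A B \in D6list.
Proof.
have := (_ : all (fun A => all (fun B => mm A B \in D6list) D6list) D6list).
move=> /(_ ltac:(by vm_compute)) /allP H hA hB.
by have /allP := H A hA; apply.
Qed.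

Lemma D6_inv A : A \in D6list -> exists2 B, B \in D6list & mm A B = I2 /\ mm B A = I2.
Proof.
move: A; apply: D6_elim.
- by exists (1,0,0,1).
- by exists (1,1,-1,0).
- by exists (0,1,-1,-1).
- by exists (-1,0,0,-1).
- by exists (-1,-1,1,0).
- by exists (0,-1,1,1).
- by exists (1,1,0,-1).
- by exists (0,1,1,0).
- by exists (-1,0,1,1).
- by exists (-1,-1,0,1).
- by exists (0,-1,-1,0).
- by exists (1,0,-1,-1).
Qed.

Lemma I2_D6 : I2 \in D6list. Proof. by []. Qed.

Lemma mulA x y z : mul (mul x y) z = mul x (mul y z).
Proof.
case: x => [[x1 x2] [[[a b] c] d]]; case: y => [[y1 y2] [[[a' b'] c'] d']];
case: z => [[z1 z2] [[[a'' b''] c''] d'']].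
rewrite /mul /vadd /mv /mm /=; pairs; ring.
Qed.

Lemma mul1x x : mul one x = x.
Proof.
case: x => [[x1 x2] [[[a b] c] d]]; rewrite /mul /vadd /mv /mm /=.
pairs; ring.
Qed.

Lemma mulx1 x : mul x one = x.
Proof.
case: x => [[x1 x2] [[[a b] c] d]]; rewrite /mul /vadd /mv /mm /=.
pairs; ring.
Qed.

Lemma inG_mul x y : inG x -> inG y -> inG (mul x y).
Proof. exact: D6_mul. Qed.

Lemma inG_inv x : inG x -> exists2 y, inG y & mul x y = one /\ mul y x = one.
Proof.
case: x => [[v1 v2] A]; rewrite /inG /= => hA; case: (@D6_inv A hA) => B hB [AB BA].
exists ((- (mv B (v1,v2)).1, - (mv B (v1,v2)).2), B) => //.
move: AB BA; case: A {hA} => [[[a b] c] d]; case: B {hB} => [[[a' b'] c'] d'].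
rewrite /mul /one /vadd /mv /mm /I2 /= => AB BA; split; congr (_, _) => //.
  move: AB => [h1 h2 h3 h4]; congr (_, _).
  + have -> : v1 + (a * - (a' * v1 + b' * v2) + b * - (c' * v1 + d' * v2)) = v1 - ((a*a'+b*c') * v1 + (a*b'+b*d')*v2) by ring.
    by rewrite h1 h2; ring.
  + have -> : v2 + (c * - (a' * v1 + b' * v2) + d * - (c' * v1 + d' * v2)) = v2 - ((c*a'+d*c') * v1 + (c*b'+d*d')*v2) by ring.
    by rewrite h3 h4; ring.
move: BA => [h1 h2 h3 h4]; congr (_, _).
  + have -> : - (a' * v1 + b' * v2) + (a' * v1 + b' * v2) = 0 by ring. by [].
  + have -> : - (c' * v1 + d' * v2) + (c' * v1 + d' * v2) = 0 by ring. by [].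
Qed.
Definition tr (v : V) : G := (v, I2).
Lemma mmI2 B : mm B I2 = B.
Proof. case: B => [[[a b] c] d]; rewrite /mm /I2 /=; pairs; ring. Qed.
Lemma I2mm B : mm I2 B = B.
Proof. case: B => [[[a b] c] d]; rewrite /mm /I2 /=; pairs; ring. Qed.
Lemma tr_comm v w : mul (tr v) (tr w) = mul (tr w) (tr v).
Proof. case: v w => [v1 v2] [w1 w2]; rewrite /mul /tr /vadd /mv /mm /I2 /=; pairs; ring. Qed.
Lemma tr_mul v w : mul (tr v) (tr w) = tr (vadd v w).
Proof. case: v w => [v1 v2] [w1 w2]; rewrite /mul /tr /vadd /mv /mm /I2 /=; pairs; ring. Qed.

Definition commT x := forall y z, inG y -> inG z -> mul y z = one ->
   mul x (mul (mul y x) z) = mul (mul (mul y x) z) x.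

Lemma Tchar x : inG x -> (x.2 = I2 <-> commT x).
Proof.
case: x => v A; rewrite /inG /= => hA; split.
  move=> -> [u B] [w C] _ _ /(congr1 snd) /= BC.
  set c := mul (mul _ _) _.
  have -> : c = tr c.1.
    by rewrite /c /tr /mul /= mmI2 BC.
  exact: (tr_comm v c.1).
move=> H.
have H1 := H (tr (1,0)) (tr (-1,0)) I2_D6 I2_D6 ltac:(by rewrite tr_mul /vadd /=).
have H2 := H (tr (0,1)) (tr (0,-1)) I2_D6 I2_D6 ltac:(by rewrite tr_mul /vadd /=).
move: H1 H2; clear H; case: v => v1 v2; move: A hA; apply: D6_elim;
 rewrite /mul /tr /vadd /mv /mm /I2 /= => H1 H2; injection H1; injection H2; intros;
 first [done | exfalso; lia].
Qed.
Lemma N_nonneg (x y : int) : 0 <= x * x + x * y + y * y.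
Proof. nia. Qed.

Lemma prod1 (a b : int) : 0 <= a -> 0 <= b -> a * b = 1 -> a = 1.
Proof.
move=> ha hb h.
have a1 : a != 0 by apply/eqP=> a0; move: h; rewrite a0 mul0r.
have b1 : b != 0 by apply/eqP=> b0; move: h; rewrite b0 mulr0.
have : a <= a * b by nia.
lia.
Qed.

Lemma unit6 (x y : int) : x * x + x * y + y * y = 1 ->
  (x,y) = (1,0) \/ (x,y) = (0,1) \/ (x,y) = (-1,1) \/ (x,y) = (-1,0) \/ (x,y) = (0,-1) \/ (x,y) = (1,-1).
Proof.
move=> H.
have hy : -1 <= y <= 1 by nia.
have hx : -1 <= x <= 1 by nia.
have : (x = -1 \/ x = 0 \/ x = 1) /\ (y = -1 \/ y = 0 \/ y = 1) by lia.
move=> K; move: H; case: K=> [[->|[->|->]] [->|[->|->]]] H;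
  first [exfalso; lia | by repeat (first [by left | right])].
Qed.

Lemma norm_r (p1 p2 v1 v2 : int) :
  v1 * p1 + v2 * (- p2) = 1 -> v1 * p2 + v2 * (p1 + p2) = 0 -> p1 * p1 + p1 * p2 + p2 * p2 = 1.
Proof.
move=> h1 h2.
have E : (v1 * p1 + v2 * (- p2))^+2 + (v1 * p1 + v2 * (- p2)) * (v1 * p2 + v2 * (p1 + p2))
   + (v1 * p2 + v2 * (p1 + p2))^+2 = (v1 * v1 + v1 * v2 + v2 * v2) * (p1 * p1 + p1 * p2 + p2 * p2) by ring.
rewrite h1 h2 in E.
apply: (prod1 (N_nonneg p1 p2) (N_nonneg v1 v2)); move: E; nia.
Qed.

Lemma norm_r5 (p1 p2 v1 v2 : int) :
  v1 * p1 + v2 * (p1 + p2) = 1 -> v1 * p2 + v2 * (- p1) = 0 -> p1 * p1 + p1 * p2 + p2 * p2 = 1.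
Proof.
move=> h1 h2.
have E : (v1 * p1 + v2 * (p1 + p2))^+2 + (v1 * p1 + v2 * (p1 + p2)) * (v1 * p2 + v2 * (- p1))
   + (v1 * p2 + v2 * (- p1))^+2 = ((v1+v2)*(v1+v2) + (v1+v2)*(-v2) + v2 * v2) * (p1 * p1 + p1 * p2 + p2 * p2) by ring.
rewrite h1 h2 in E.
apply: (prod1 (N_nonneg p1 p2) (N_nonneg (v1+v2) (-v2))); move: E; nia.
Qed.
Ltac unpair := repeat match goal with H : (_, _) = (_, _) |- _ => move/pair_equal_spec: H => [? ?] end.
Definition rho : G := ((0,0), rZ).
Definition sig : G := ((0,0), sZ).
Definition r5 : M2 := (1,1,-1,0).

Lemma R_cases (R : M2) (p1 p2 q1 q2 : int) : R \in D6list -> (p1 != 0) || (p2 != 0) ->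
  mv R (p1,p2) = (q1,q2) -> mv R (q1,q2) = (q1 - p1, q2 - p2) -> R = rZ \/ R = r5.
Proof.
move=> hR hp; move: R hR; apply: D6_elim; rewrite /mv /= => -[e1 e2] [e3 e4];
  first [by left | by right | exfalso; move: hp => /orP[] /eqP hp; lia].
Qed.

Ltac crunch_fin :=
  let u1 := fresh "u1" in let u2 := fresh "u2" in let w1 := fresh "w1" in let w2 := fresh "w2" in
  let H5 := fresh "H5" in let H6 := fresh "H6" in
  move=> [u1 u2] [w1 w2];
  rewrite /mul /vadd /mv /mm /one /I2 /rho /sig /rZ /sZ /=; intros H5 H6;
  unpair;
  split; [by [] | split; pairs; lia].

Lemma crunch (R : M2) (p1 p2 q1 q2 v1 v2 : int) (S : M2) :
  R \in D6list -> S \in D6list -> (p1 != 0) || (p2 != 0) ->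
  mv R (p1,p2) = (q1,q2) -> mv R (q1,q2) = (q1 - p1, q2 - p2) ->
  mv S (p1,p2) = (p1,p2) -> mv S (q1,q2) = (p1 - q1, p2 - q2) ->
  v1 * p1 + v2 * q1 = 1 -> v1 * p2 + v2 * q2 = 0 ->
  forall u w,
  mul (w,S) (w,S) = one -> mul (mul (w,S) (u,R)) (mul (w,S) (u,R)) = one ->
  (p1,q1,p2,q2) \in D6list /\ mul (u,R) (mv R u, (p1,q1,p2,q2)) = mul (mv R u, (p1,q1,p2,q2)) rho
   /\ mul (w,S) (mv R u, (p1,q1,p2,q2)) = mul (mv R u, (p1,q1,p2,q2)) sig.
Proof.
move=> hR hS hp h1 h2 h3 h4 h5 h6.
case: (R_cases hR hp h1 h2) => ?; subst R.
- move: h1 h2; rewrite /mv /rZ /= => -[e1 e2] _.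
  have hq1 : q1 = - p2 by lia.
  have hq2 : q2 = p1 + p2 by lia.
  clear e1 e2; subst q1 q2.
  have := norm_r h5 h6.
  move=> /unit6 [|[|[|[|[|]]]]] [? ?]; subst p1 p2; move: S hS h3 h4;
  apply: D6_elim; rewrite /mv /= => ? ?; unpair; try (exfalso; lia); crunch_fin.
- move: h1 h2; rewrite /mv /r5 /= => -[e1 e2] _.
  have hq1 : q1 = p1 + p2 by lia.
  have hq2 : q2 = - p1 by lia.
  clear e1 e2; subst q1 q2.
  have := norm_r5 h5 h6.
  move=> /unit6 [|[|[|[|[|]]]]] [? ?]; subst p1 p2; move: S hS h3 h4;
  apply: D6_elim; rewrite /mv /= => ? ?; unpair; try (exfalso; lia); crunch_fin.
Qed.
Record autG (psi : G -> G) : Prop := AutG {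
  aG_in : forall x, inG x -> inG (psi x);
  aG_inj : forall x y, inG x -> inG y -> psi x = psi y -> x = y;
  aG_surj : forall y, inG y -> exists2 x, inG x & psi x = y;
  aG_mul : forall x y, inG x -> inG y -> psi (mul x y) = mul (psi x) (psi y) }.

Lemma inG_one : inG one. Proof. by []. Qed.
Lemma inG_tr v : inG (tr v). Proof. by []. Qed.
Ltac ginG := solve [repeat (first [apply: inG_mul | apply: inG_one | apply: inG_tr | assumption])].

Lemma aut_one psi : autG psi -> psi one = one.
Proof.
move=> A.
have ie := aG_in A inG_one.
have he : psi one = mul (psi one) (psi one) by rewrite -(aG_mul A) ?mul1x //.
case: (inG_inv ie) => y iy [_ ye].
by rewrite -ye {2}he -mulA ye mul1x.
Qed.

Lemma aut_comm psi x : autG psi -> inG x -> commT x -> commT (psi x).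
Proof.
move=> A ix H y' z' iy' iz' e'.
case: (aG_surj A iy') => y iy ?; case: (aG_surj A iz') => z iz ?; subst y' z'.
have e : mul y z = one.
  apply: (aG_inj A); [ginG | ginG|]; by rewrite (aG_mul A) // e' (aut_one A).
have := congr1 psi (H y z iy iz e).
by rewrite !(aG_mul A) //; ginG.
Qed.

Lemma aut_comm' psi x : autG psi -> inG x -> commT (psi x) -> commT x.
Proof.
move=> A ix H y z iy iz e.
have e' : mul (psi y) (psi z) = one by rewrite -(aG_mul A) // e (aut_one A).
have := H (psi y) (psi z) (aG_in A iy) (aG_in A iz) e'.
rewrite -!(aG_mul A) //; try ginG.
by apply: (aG_inj A); ginG.
Qed.

Lemma aut_T psi x : autG psi -> inG x -> (x.2 = I2 <-> (psi x).2 = I2).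
Proof.
move=> A ix; rewrite (Tchar ix) (Tchar (aG_in A ix)); split.
  exact: aut_comm.
exact: aut_comm'.
Qed.

Lemma aut_tr psi w : autG psi -> psi (tr w) = tr (psi (tr w)).1.
Proof.
move=> A; have := proj1 (aut_T A (inG_tr w)) erefl.
by case: (psi (tr w)) => a b /= ->.
Qed.

Lemma aut_tr_add psi v w : autG psi ->
  (psi (tr (vadd v w))).1 = vadd (psi (tr v)).1 (psi (tr w)).1.
Proof.
move=> A; rewrite -tr_mul (aG_mul A) ?inG_tr // (aut_tr v A) (aut_tr w A).
by rewrite tr_mul.
Qed.

Lemma lin_int (f : int -> int) : (forall a b, f (a + b) = f a + f b) -> forall m, f m = m * f 1.
Proof.
move=> fD.
have f0 : f 0 = 0.
  have := fD 0 0; rewrite addr0 => h; lia.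
have fN a : f (- a) = - f a.
  have := fD (- a) a; rewrite addNr f0 => h; lia.
have fn (n : nat) : f n = n%:Z * f 1.
  elim: n => [|n IH]; first by rewrite f0 mul0r.
  by rewrite -addn1 PoszD fD IH; ring.
case=> n; first exact: fn.
by rewrite NegzE fN fn; ring.
Qed.

Lemma aut_tr_lin psi (e : V) m : autG psi ->
  (psi (tr (m * e.1, m * e.2))).1 = (m * (psi (tr e)).1.1, m * (psi (tr e)).1.2).
Proof.
move=> A.
have add a b : (psi (tr ((a + b) * e.1, (a + b) * e.2))).1 =
   vadd (psi (tr (a * e.1, a * e.2))).1 (psi (tr (b * e.1, b * e.2))).1.
  rewrite -aut_tr_add //; congr (psi (tr _)).1; rewrite /vadd /=; pairs; ring.
have h1 := lin_int (f := fun m => (psi (tr (m * e.1, m * e.2))).1.1) (fun a b => congr1 fst (add a b)) m.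
have h2 := lin_int (f := fun m => (psi (tr (m * e.1, m * e.2))).1.2) (fun a b => congr1 snd (add a b)) m.
rewrite /= !mul1r in h1 h2.
rewrite -surjective_pairing in h1 h2.
by rewrite -h1 -h2 -surjective_pairing.
Qed.

Lemma aut_tr_formula psi m n : autG psi ->
  psi (tr (m, n)) = tr (m * (psi (tr (1,0))).1.1 + n * (psi (tr (0,1))).1.1,
                        m * (psi (tr (1,0))).1.2 + n * (psi (tr (0,1))).1.2).
Proof.
move=> A.
rewrite (aut_tr (m,n) A).
have -> : (m, n) = vadd (m * ((1,0):V).1, m * ((1,0):V).2) (n * ((0,1):V).1, n * ((0,1):V).2).
  by rewrite /vadd /=; pairs; ring.
by rewrite aut_tr_add // !aut_tr_lin.
Qed.
Lemma rel_tr (u : V) (R : M2) (a b : V) :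
  mul (u,R) (tr a) = mul (tr b) (u,R) -> mv R a = b.
Proof.
case: u R a b => [u1 u2] [[[r1 r2] r3] r4] [a1 a2] [b1 b2].
rewrite /mul /tr /vadd /mv /mm /I2 /= => E; unpair; pairs; lia.
Qed.

Definition rpowG (n : nat) : G := iter n (mul rho) one.

Theorem model_inner psi : autG psi ->
  exists2 h, inG h & forall x, inG x -> mul (psi x) h = mul h x.
Proof.
move=> A.
set p1 := (psi (tr (1,0))).1.1; set p2 := (psi (tr (1,0))).1.2.
set q1 := (psi (tr (0,1))).1.1; set q2 := (psi (tr (0,1))).1.2.
have F := fun m n => aut_tr_formula m n A.
rewrite -/p1 -/p2 -/q1 -/q2 in F.
have iR : inG (psi rho) by apply: (aG_in A).
have iS : inG (psi sig) by apply: (aG_in A).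
case E1 : (psi rho) iR => [u R] iR.
case E2 : (psi sig) iS => [w S] iS.
rewrite /inG /= in iR iS.
have rel x y x' y' : inG x -> inG y -> inG x' -> inG y' -> mul x y = mul x' y' ->
    mul (psi x) (psi y) = mul (psi x') (psi y').
  by move=> ix iy ix' iy' e; rewrite -!(aG_mul A) // e.
have h1 : mv R (p1,p2) = (q1,q2).
  have := rel rho (tr (1,0)) (tr (0,1)) rho erefl erefl erefl erefl erefl.
  rewrite E1 !F => /rel_tr; rewrite ?mul1r ?mul0r ?addr0 ?add0r //.
have h2 : mv R (q1,q2) = (q1 - p1, q2 - p2).
  have := rel rho (tr (0,1)) (tr (-1,1)) rho erefl erefl erefl erefl erefl.
  rewrite E1 !F => /rel_tr; rewrite ?mul1r ?mul0r ?addr0 ?add0r => ->; pairs; ring.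
have h3 : mv S (p1,p2) = (p1,p2).
  have := rel sig (tr (1,0)) (tr (1,0)) sig erefl erefl erefl erefl erefl.
  rewrite E2 !F => /rel_tr; rewrite ?mul1r ?mul0r ?addr0 ?add0r //.
have h4 : mv S (q1,q2) = (p1 - q1, p2 - q2).
  have := rel sig (tr (0,1)) (tr (1,-1)) sig erefl erefl erefl erefl erefl.
  rewrite E2 !F => /rel_tr; rewrite ?mul1r ?mul0r ?addr0 ?add0r => ->; pairs; ring.
have h5 : mul (w,S) (w,S) = one.
  have := rel sig sig one one erefl erefl erefl erefl erefl.
  by rewrite E2 (aut_one A) mul1x.
have h6 : mul (mul (w,S) (u,R)) (mul (w,S) (u,R)) = one.
  have := rel (mul sig rho) (mul sig rho) one one erefl erefl erefl erefl erefl.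
  by rewrite !(aG_mul A) // E1 E2 (aut_one A) mul1x.
have hp : (p1 != 0) || (p2 != 0).
  case: (boolP ((p1 != 0) || (p2 != 0))) => // /norP [/negPn/eqP e1 /negPn/eqP e2]; exfalso.
  have := F 1 0; rewrite ?mul1r ?mul0r ?addr0 ?add0r e1 e2 => e.
  have : tr (1,0) = one by apply: (aG_inj A) => //; rewrite e (aut_one A).
  by [].
have [v1 [v2 [hv1 hv2]]] : exists v1 v2, v1 * p1 + v2 * q1 = 1 /\ v1 * p2 + v2 * q2 = 0.
  case: (aG_surj A (inG_tr (1,0))) => g ig eg.
  have g2 : g.2 = I2 by apply/(aut_T A ig); rewrite eg.
  move: eg; case: g g2 {ig} => [[v1 v2] B] /= -> .
  rewrite -/(tr (v1,v2)) F /tr => /pair_equal_spec [/pair_equal_spec [e1 e2] _].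
  by exists v1, v2.
have [iD [hrho hsig]] := crunch iR iS hp h1 h2 h3 h4 hv1 hv2 h5 h6.
set h := (mv R u, (p1, q1, p2, q2)).
exists h => //.
have clos x y : inG x -> inG y -> mul (psi x) h = mul h x -> mul (psi y) h = mul h y ->
    mul (psi (mul x y)) h = mul h (mul x y).
  move=> ix iy ex ey; by rewrite (aG_mul A) // mulA ey -!mulA ex.
have Ptr v : mul (psi (tr v)) h = mul h (tr v).
  case: v => m n; rewrite F /h; case: (mv R u) => t1 t2.
  rewrite /mul /tr /vadd /mv /mm /I2 /=; pairs; ring.
have irp k : inG (rpowG k).
  elim: k => [|k IH] //=; exact: inG_mul.
have Prp k : mul (psi (rpowG k)) h = mul h (rpowG k).
  elim: k => [|k IH] /=; first by rewrite (aut_one A) mul1x mulx1.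
  by apply: (clos) => //; rewrite E1.
have Psig : mul (psi sig) h = mul h sig by rewrite E2.
have gen B : B \in D6list -> exists k (b : bool), ((0,0),B) = if b then mul (rpowG k) sig else rpowG k.
  move: B; apply: D6_elim.
  - by exists 0%N, false.
  - by exists 1%N, false.
  - by exists 2%N, false.
  - by exists 3%N, false.
  - by exists 4%N, false.
  - by exists 5%N, false.
  - by exists 0%N, true.
  - by exists 1%N, true.
  - by exists 2%N, true.
  - by exists 3%N, true.
  - by exists 4%N, true.
  - by exists 5%N, true.
case=> v B iB.
have -> : (v, B) = mul (tr v) ((0,0),B).
  case: v B {iB} => [x1 x2] [[[b1 b2] b3] b4]; rewrite /mul /tr /vadd /mv /mm /I2 /=; pairs; ring.
apply: (clos) => //.
case: (gen B iB) => k [[] ->].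
- by apply: (clos) => //; apply: irp.
- exact: Prp.
Qed.
Section RealPart.
Context {R : realType}.
Local Notation mx2 := (@mx2 R).
Local Notation vec2 := (@vec2 R).

Lemma mx2_mul a b c d a' b' c' d' :
  mx2 a b c d *m mx2 a' b' c' d' = mx2 (a*a'+b*c') (a*b'+b*d') (c*a'+d*c') (c*b'+d*d').
Proof.
apply/matrixP => i j; rewrite !mxE !big_ord_recl big_ord0 !mxE /=.
by case: (nat_of_ord i == 0)%N; case: (nat_of_ord j == 0)%N; rewrite addr0.
Qed.

Lemma mx2_vec a b c d x y : mx2 a b c d *m vec2 x y = vec2 (a*x+b*y) (c*x+d*y).
Proof.
apply/matrixP => i j; rewrite !mxE !big_ord_recl big_ord0 !mxE /=.
by case: (nat_of_ord i == 0)%N; rewrite addr0.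
Qed.

Lemma mx2_eta (X : 'M[R]_2) : X = mx2 (X 0 0) (X 0 1) (X 1 0) (X 1 1).
Proof.
apply/matrixP => i j; rewrite !mxE.
case: i => [[|[|i]] hi] //; case: j => [[|[|j]] hj] //=; congr (X _ _); exact: val_inj.
Qed.

Lemma vec2_eta (x : 'cV[R]_2) : x = vec2 (x 0 0) (x 1 0).
Proof.
apply/matrixP => i j; rewrite !mxE.
case: i => [[|[|i]] hi] //; case: j => [[|j] hj] //=; congr (x _ _); exact: val_inj.
Qed.

Lemma mx2_inj a b c d a' b' c' d' : mx2 a b c d = mx2 a' b' c' d' ->
  [/\ a = a', b = b', c = c' & d = d'].
Proof.
move=> E.
have e i j := congr1 (fun X : 'M[R]_2 => X i j) E.
have := e 0 0; have := e 0 1; have := e 1 0; have := e 1 1; rewrite !mxE /=.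
by move=> -> -> -> ->.
Qed.

Lemma vec2_inj a b a' b' : vec2 a b = vec2 a' b' -> a = a' /\ b = b'.
Proof.
move=> E.
have e i := congr1 (fun X : 'cV[R]_2 => X i 0) E.
have := e 0; have := e 1; rewrite !mxE /=.
by move=> -> ->.
Qed.

Lemma mx2_1 : (1%:M : 'M[R]_2) = mx2 1 0 0 1.
Proof.
apply/matrixP => i j; rewrite !mxE.
by case: i => [[|[|i]] hi] //; case: j => [[|[|j]] hj].
Qed.

Lemma vec2_add a b c d : vec2 a b + vec2 c d = vec2 (a + c) (b + d).
Proof. by apply/matrixP => i j; rewrite !mxE; case: (i == 0 :> nat). Qed.

Lemma vec2_scale k a b : k *: vec2 a b = vec2 (k * a) (k * b).
Proof. by apply/matrixP => i j; rewrite !mxE; case: (i == 0 :> nat). Qed.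

Lemma vec2_0 : (0 : 'cV[R]_2) = vec2 0 0.
Proof. by apply/matrixP => i j; rewrite !mxE; case: (i == 0 :> nat). Qed.

Lemma s3s3 : s3 R * s3 R = 3.
Proof. by rewrite /s3 -expr2 sqr_sqrtr // ler0n. Qed.

Lemma s3_neq0 : s3 R != 0.
Proof. by apply/eqP => e; have := s3s3; rewrite e mul0r => /eqP; rewrite eq_sym pnatr_eq0. Qed.

End RealPart.
Section RealPart2.
Context {R : realType}.
Local Notation mx2 := (@mx2 R).
Local Notation vec2 := (@vec2 R).
Local Notation s3 := (s3 R).

Definition Emat : 'M[R]_2 := mx2 1 (1/2) 0 (s3/2).
Definition Einv : 'M[R]_2 := mx2 1 (- (s3/3)) 0 (2 * s3 / 3).
Definition mxZ (A : M2) : 'M[R]_2 := let '(a,b,c,d) := A in mx2 a%:~R b%:~R c%:~R d%:~R.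
Definition colZ (v : V) : 'cV[R]_2 := vec2 v.1%:~R v.2%:~R.
Definition Elat (v : V) : pt R := v.1%:~R *: vec2 1 0 + v.2%:~R *: vec2 (1/2) (s3 / 2).
Definition ER (A : M2) : 'M[R]_2 := Emat *m mxZ A *m Einv.

Lemma EinvE : Einv *m Emat = 1%:M.
Proof.
rewrite /Einv /Emat mx2_mul mx2_1; have h := @s3s3 R; congr mx2; lra.
Qed.

Lemma EmatE : Emat *m Einv = 1%:M.
Proof.
rewrite /Einv /Emat mx2_mul mx2_1; have h := @s3s3 R; congr mx2; lra.
Qed.

Lemma mxZ_mul A B : mxZ (mm A B) = mxZ A *m mxZ B.
Proof.
case: A => [[[a b] c] d]; case: B => [[[a' b'] c'] d'].
by rewrite /mm /mxZ mx2_mul !intrD !intrM.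
Qed.

Lemma mxZ_col A v : mxZ A *m colZ v = colZ (mv A v).
Proof.
case: A => [[[a b] c] d]; case: v => x y.
by rewrite /mv /mxZ /colZ mx2_vec /= !intrD !intrM.
Qed.

Lemma Elat_E v : Elat v = Emat *m colZ v.
Proof.
case: v => x y; rewrite /Elat /Emat /colZ mx2_vec !vec2_scale vec2_add /=.
congr vec2; ring.
Qed.

Lemma ER_mul A B : ER (mm A B) = ER A *m ER B.
Proof.
by rewrite /ER mxZ_mul !mulmxA -(mulmxA _ Einv) EinvE mulmx1.
Qed.

Lemma ER_Elat A v : ER A *m Elat v = Elat (mv A v).
Proof.
by rewrite !Elat_E /ER -!mulmxA (mulmxA Einv) EinvE mul1mx mxZ_col.
Qed.

Lemma ER_I2 : ER I2 = 1%:M.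
Proof.
rewrite /ER; have -> : mxZ I2 = 1%:M by rewrite /mxZ /I2 mx2_1.
by rewrite mulmx1 EmatE.
Qed.

Lemma mxZ_inj A B : mxZ A = mxZ B -> A = B.
Proof.
case: A => [[[a b] c] d]; case: B => [[[a' b'] c'] d'].
move=> /mx2_inj [e1 e2 e3 e4].
by rewrite (intr_inj e1) (intr_inj e2) (intr_inj e3) (intr_inj e4).
Qed.

Lemma ER_inj A B : ER A = ER B -> A = B.
Proof.
move=> E; apply: mxZ_inj.
have eA C : Einv *m ER C *m Emat = mxZ C.
  by rewrite /ER !mulmxA EinvE mul1mx -mulmxA EinvE mulmx1.
by rewrite -eA E eA.
Qed.

Lemma Elat_inj v w : Elat v = Elat w -> v = w.
Proof.
case: v w => [x y] [x' y']; rewrite /Elat !vec2_scale !vec2_add /=.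
move=> /vec2_inj [e1 e2].
have hy : y%:~R = y'%:~R :> R.
  have := s3_neq0 (R:=R) => hs.
  apply: (mulIf (x := s3 / 2)); first by apply: mulf_neq0; rewrite // invr_eq0 pnatr_eq0.
  lra.
have hx : x%:~R = x'%:~R :> R by lra.
by rewrite (intr_inj hx) (intr_inj hy).
Qed.

Lemma Elat_add v w : Elat (vadd v w) = Elat v + Elat w.
Proof.
case: v w => [x y] [x' y']; rewrite /Elat /vadd !vec2_scale !vec2_add /= !intrD.
congr vec2; ring.
Qed.

Lemma Elat_0 : Elat (0,0) = 0.
Proof. by rewrite /Elat !scale0r addr0. Qed.

Lemma rot60E : ER rZ = rot60 R.
Proof.
have : rot60 R *m Emat = Emat *m mxZ rZ.
  rewrite /rot60 /Emat /mxZ /rZ mx2_mul mx2_mul; have h := @s3s3 R; congr mx2; lra.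
by rewrite /ER => <-; rewrite -mulmxA EmatE mulmx1.
Qed.

Lemma reflE : ER sZ = refl R.
Proof.
have : refl R *m Emat = Emat *m mxZ sZ.
  rewrite /refl /Emat /mxZ /sZ mx2_mul mx2_mul; congr mx2; lra.
by rewrite /ER => <-; rewrite -mulmxA EmatE mulmx1.
Qed.

End RealPart2.
Section Affine.
Context {R : realType}.
Implicit Types f g h : affmap R.

Lemma acompA f g h : acomp (acomp f g) h = acomp f (acomp g h).
Proof. by rewrite /acomp /= mulmxDr !mulmxA addrA. Qed.

Lemma acomp1f f : acomp (aid R) f = f.
Proof. by case: f => a A; rewrite /acomp /aid /= add0r !mul1mx. Qed.

Lemma acompf1 f : acomp f (aid R) = f.
Proof. by case: f => a A; rewrite /acomp /aid /= mulmx0 addr0 mulmx1. Qed.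

Lemma acompV f : f.2 \in unitmx -> acomp f (ainv f) = aid R.
Proof.
case: f => a A /= hA; rewrite /acomp /ainv /aid /=.
by rewrite mulmxN mulmxA mulmxV // mul1mx subrr.
Qed.

Lemma acompVl f : f.2 \in unitmx -> acomp (ainv f) f = aid R.
Proof.
case: f => a A /= hA; rewrite /acomp /ainv /aid /=.
by rewrite mulVmx // addrC subrr.
Qed.

Lemma ainv_unit f : f.2 \in unitmx -> (ainv f).2 \in unitmx.
Proof. by move=> h; rewrite /ainv /= unitmx_inv. Qed.

Lemma acomp_unit f g : f.2 \in unitmx -> g.2 \in unitmx -> (acomp f g).2 \in unitmx.
Proof. by move=> h1 h2; rewrite /acomp /= unitmx_mul h1 h2. Qed.

Lemma ainv_uniq f g : f.2 \in unitmx -> acomp f g = aid R -> g = ainv f.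
Proof.
move=> hf e.
by rewrite -[g]acomp1f -(acompVl hf) acompA e acompf1.
Qed.

Lemma ainv_aid : ainv (aid R) = aid R.
Proof. by rewrite /ainv /aid /= invmx1 mulmx0 oppr0. Qed.

Lemma conj_aid g : conj (aid R) g = g.
Proof. by rewrite /conj ainv_aid acomp1f acompf1. Qed.

Lemma ainv_comp f g : f.2 \in unitmx -> g.2 \in unitmx ->
  ainv (acomp f g) = acomp (ainv g) (ainv f).
Proof.
move=> hf hg; symmetry; apply: ainv_uniq; first exact: acomp_unit.
by rewrite acompA -(acompA g) acompV // acomp1f acompV.
Qed.

Lemma conj_comp f1 f2 g : f1.2 \in unitmx -> f2.2 \in unitmx ->
  conj (acomp f1 f2) g = conj f1 (conj f2 g).
Proof.
move=> h1 h2; rewrite /conj ainv_comp //.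
by rewrite !acompA.
Qed.

Lemma conjVK f g : f.2 \in unitmx -> conj (ainv f) (conj f g) = g.
Proof.
move=> hf; rewrite -conj_comp ?ainv_unit // acompVl //; exact: conj_aid.
Qed.

Lemma conjKV f g : f.2 \in unitmx -> conj f (conj (ainv f) g) = g.
Proof.
move=> hf; rewrite -conj_comp ?ainv_unit // acompV //; exact: conj_aid.
Qed.

Lemma conj_mul f g h : f.2 \in unitmx -> conj f (acomp g h) = acomp (conj f g) (conj f h).
Proof.
move=> hf; rewrite /conj !acompA; congr acomp; congr acomp.
by rewrite -acompA acompVl // acomp1f.
Qed.

Lemma app_comp f g x : app (acomp f g) x = app f (app g x).
Proof. by rewrite /app /acomp /= mulmxDr mulmxA addrA. Qed.

Lemma app_aid x : app (aid R) x = x.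
Proof. by rewrite /app /aid /= add0r mul1mx. Qed.

Definition Phi (x : G) : affmap R := (Elat x.1, ER x.2).

Lemma Phi_mul x y : Phi (mul x y) = acomp (Phi x) (Phi y).
Proof. by rewrite /Phi /mul /acomp /= Elat_add ER_Elat ER_mul. Qed.

Lemma Phi_one : Phi one = aid R.
Proof. by rewrite /Phi /one /aid /= Elat_0 ER_I2. Qed.

Lemma Phi_inj x y : Phi x = Phi y -> x = y.
Proof.
case: x y => [v A] [w B]; rewrite /Phi /= => /pair_equal_spec [/Elat_inj -> /ER_inj ->].
by [].
Qed.

Lemma Phi_unit x : inG x -> (Phi x).2 \in unitmx.
Proof.
move=> ix; case: (inG_inv ix) => y _ [e _].
have := congr1 Phi e; rewrite Phi_mul Phi_one /acomp /aid => /pair_equal_spec [_ e2].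
by case: (mulmx1_unit e2).
Qed.

Definition rpowZ (k : nat) : M2 := iter k (mm rZ) I2.

Lemma ER_rpow k : ER (rpowZ k) = rot60 R ^+ k.
Proof.
elim: k => [|k IH]; first by rewrite /= ER_I2 expr0.
have -> : rpowZ k.+1 = mm rZ (rpowZ k) by [].
by rewrite ER_mul IH rot60E exprS mulmxE.
Qed.

Lemma in_D6_iff (X : 'M[R]_2) : in_D6 X <-> exists2 A, A \in D6list & X = ER A.
Proof.
split.
  case=> [[k hk] [->|->]].
    exists (rpowZ k); last by rewrite ER_rpow.
    by move: hk; do 6 (case: k => [|k] //).
  exists (mm (rpowZ k) sZ); last by rewrite ER_mul ER_rpow reflE.
  by move: hk; do 6 (case: k => [|k] //).
case=> A hA ->; move: A hA; apply: D6_elim.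
- by exists (@Ordinal 6 0 erefl); left; rewrite -ER_rpow.
- by exists (@Ordinal 6 1 erefl); left; rewrite -ER_rpow.
- by exists (@Ordinal 6 2 erefl); left; rewrite -ER_rpow.
- by exists (@Ordinal 6 3 erefl); left; rewrite -ER_rpow.
- by exists (@Ordinal 6 4 erefl); left; rewrite -ER_rpow.
- by exists (@Ordinal 6 5 erefl); left; rewrite -ER_rpow.
- by exists (@Ordinal 6 0 erefl); right; rewrite -ER_rpow -reflE -ER_mul.
- by exists (@Ordinal 6 1 erefl); right; rewrite -ER_rpow -reflE -ER_mul.
- by exists (@Ordinal 6 2 erefl); right; rewrite -ER_rpow -reflE -ER_mul.
- by exists (@Ordinal 6 3 erefl); right; rewrite -ER_rpow -reflE -ER_mul.
- by exists (@Ordinal 6 4 erefl); right; rewrite -ER_rpow -reflE -ER_mul.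
- by exists (@Ordinal 6 5 erefl); right; rewrite -ER_rpow -reflE -ER_mul.
Qed.

Lemma p6m_iff g : p6m g <-> exists2 x, inG x & g = Phi x.
Proof.
split.
  case: g => a A [[m [n ea]] /in_D6_iff [B hB eB]].
  exists ((m,n), B) => //; move: ea eB; rewrite /Phi /= => -> ->; reflexivity.
case=> [[v B] hB ->]; split.
  by exists v.1, v.2.
by apply/in_D6_iff; exists B.
Qed.

End Affine.
Section Main.
Context {R : realType}.
Local Notation M := (@p6m R).
Implicit Types f g h : affmap R.

Lemma p6m_Phi x : inG x -> M (Phi x).
Proof. by move=> ix; apply/p6m_iff; exists x. Qed.

Lemma p6m_mul g h : M g -> M h -> M (acomp g h).
Proof.
move=> /p6m_iff [x ix ->] /p6m_iff [y iy ->]; rewrite -Phi_mul.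
by apply: p6m_Phi; apply: inG_mul.
Qed.

Lemma p6m_unit g : M g -> g.2 \in unitmx.
Proof. by move=> /p6m_iff [x ix ->]; apply: Phi_unit. Qed.

Lemma p6m_inv g : M g -> M (ainv g).
Proof.
move=> /p6m_iff [x ix ->]; case: (inG_inv ix) => y iy [e _].
have : acomp (Phi x) (Phi y) = aid R by rewrite -Phi_mul e Phi_one.
move/(ainv_uniq (Phi_unit ix)) <-; exact: p6m_Phi.
Qed.

Lemma p6m_aid : M (aid R).
Proof. by rewrite -Phi_one; apply: p6m_Phi. Qed.

Lemma p6m_conj h g : M h -> M g -> M (conj h g).
Proof. by move=> hh hg; rewrite /conj; apply: p6m_mul; [apply: p6m_mul|apply: p6m_inv]. Qed.

Lemma p6m_NA h : M h -> in_NA M h.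
Proof.
move=> hh; split; first exact: p6m_unit.
move=> g; split; first exact: p6m_conj.
move=> hc; rewrite -(conjVK g (p6m_unit hh)); apply: p6m_conj => //; exact: p6m_inv.
Qed.

Theorem B_real phi : is_aut M phi -> exists2 h, M h & forall g, M g -> phi g = conj h g.
Proof.
case=> pin [pinj [psurj pmul]].
pose P x y := inG y /\ Phi y = phi (Phi x).
have ex x : inG x -> exists y, P x y.
  move=> ix; have := pin _ (p6m_Phi ix); case/p6m_iff => y iy e; by exists y.
have [psi hpsi] : {psi : G -> G | forall x, inG x -> P x (psi x)}.
  exists (fun x => epsilon (inhabits one) (P x)) => x ix; apply: epsilon_spec; exact: ex.
have A : autG psi.
  split.
  - by move=> x ix; case: (hpsi x ix).
  - move=> x y ix iy e; apply: (@Phi_inj R); apply: pinj; try exact: p6m_Phi.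
    by case: (hpsi x ix) => _ <-; case: (hpsi y iy) => _ <-; rewrite e.
  - move=> y iy; case: (psurj _ (p6m_Phi iy)) => g [/p6m_iff [x ix ->] e].
    exists x => //; apply: (@Phi_inj R); case: (hpsi x ix) => _ ->; exact: e.
  - move=> x y ix iy; apply: (@Phi_inj R).
    have ixy := inG_mul ix iy.
    case: (hpsi _ ixy) => _ ->; rewrite Phi_mul pmul; [|exact: p6m_Phi ix|exact: p6m_Phi iy].
    by case: (hpsi x ix) => _ <-; case: (hpsi y iy) => _ <-; rewrite Phi_mul.

case: (model_inner A) => h ih H.
exists (Phi h); first exact: p6m_Phi.
move=> g /p6m_iff [x ix ->].
case: (hpsi x ix) => _ <-.
have := congr1 (@Phi R) (H x ix); rewrite !Phi_mul => e.
rewrite /conj -e acompA acompV ?acompf1 //; exact: Phi_unit.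
Qed.

End Main.
Lemma sig_eq (A : Type) (P : A -> Prop) (a b : {x | P x}) : proj1_sig a = proj1_sig b -> a = b.
Proof. case: a b => [a pa] [b pb] /= e; subst b; by rewrite (proof_irrelevance _ pa pb). Qed.

Section Main2.
Context {R : realType}.
Local Notation M := (@p6m R).
Implicit Types f g h : affmap R.

Lemma centralizer f : f.2 \in unitmx -> (forall g, M g -> conj f g = g) -> f = aid R.
Proof.
move=> hf H.
have C g : M g -> acomp f g = acomp g f.
  move=> hg; rewrite -{2}(H g hg) /conj acompA acompVl // acompf1 //.
have hs := @s3s3 R; have hs0 := @s3_neq0 R.
case: f hf H C => a A hf H C.
have eA : A = 1%:M.
  have := C _ (p6m_Phi (inG_tr (1,0))); have := C _ (p6m_Phi (inG_tr (0,1))).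
  rewrite /Phi /tr /acomp /= ER_I2 !mulmx1 !mul1mx.
  have -> : @Elat R (1,0) = @vec2 R 1 0 by rewrite /Elat /= scale1r scale0r addr0.
  have -> : @Elat R (0,1) = @vec2 R (1/2) (s3 R/2) by rewrite /Elat /= scale1r scale0r add0r.
  move=> /pair_equal_spec [e1 _] /pair_equal_spec [e2 _].
  have {e1} e1 : A *m @vec2 R (1/2) (s3 R/2) = @vec2 R (1/2) (s3 R/2) by move: e1; rewrite addrC => /addIr.
  have {e2} e2 : A *m @vec2 R 1 0 = @vec2 R 1 0 by move: e2; rewrite addrC => /addIr.
  move: e1 e2; rewrite (mx2_eta A) !mx2_vec => /vec2_inj [e1 e2] /vec2_inj [e3 e4].
  rewrite mx2_1.
  have ha : A 0 0 = 1 by lra.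
  have hc : A 1 0 = 0 by lra.
  have hb : A 0 1 * (s3 R / 2) = 0 by lra.
  have hd : (A 1 1 - 1) * (s3 R / 2) = 0 by lra.
  have hs2 : s3 R / 2 != 0 by apply: mulf_neq0; rewrite // invr_eq0 pnatr_eq0.
  move: hb hd => /eqP; rewrite mulf_eq0 (negbTE hs2) orbF => /eqP ->.
  move/eqP; rewrite mulf_eq0 (negbTE hs2) orbF subr_eq0 => /eqP ->.
  by rewrite ha hc.
subst A.
have := C _ (p6m_Phi (@inG_one)); rewrite /Phi /= Elat_0.
have := C _ (p6m_Phi (x := rho) erefl).
rewrite /Phi /acomp /= Elat_0 rot60E mulmx0 addr0 add0r mul1mx mulmx1.
move=> /pair_equal_spec [e _] _.
rewrite /aid; congr pair.
move: e; rewrite (vec2_eta a) /rot60 mx2_vec vec2_0 => /vec2_inj [e1 e2].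
set x := a 0 0 in e1 e2 *; set y := a 1 0 in e1 e2 *.
have hx : x = - (s3 R * y) by lra.
have hy : y = s3 R * x by lra.
have : y = - (s3 R * s3 R) * y by rewrite {1}hy hx; ring.
rewrite hs => ey.
have y0 : y = 0 by lra.
by rewrite y0 hx y0 mulr0 oppr0.
Qed.

End Main2.
Section Main3.
Context {R : realType}.
Local Notation M := (@p6m R).
Implicit Types f g h : affmap R.

Theorem A_real f : in_NA M f -> M f.
Proof.
case=> hf H.
have aut : is_aut M (conj f).
  split; first by move=> g /(H g).
  split.
    move=> g h _ _ e; by rewrite -(conjVK g hf) e conjVK.
  split.
    move=> h hh; exists (conj (ainv f) h); split; last exact: conjKV.
    by apply/(H _); rewrite conjKV.
  by move=> g h _ _; rewrite conj_mul.
case: (B_real aut) => h hh Hh.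
have hu := p6m_unit hh.
have e : acomp (ainv h) f = aid R.
  apply: centralizer; first by apply: acomp_unit => //; exact: ainv_unit.
  move=> g hg; rewrite conj_comp ?ainv_unit // Hh //; exact: conjVK.
have : f = h by rewrite -[f]acomp1f -(acompV hu) acompA e acompf1.
by move=> ->.
Qed.

Lemma orbit_app f x : M f -> Defs.orbit M (app f x) = Defs.orbit M x.
Proof.
move=> hf; apply: functional_extensionality => y; apply: propositional_extensionality.
split.
  case=> g [hg ->]; exists (acomp g f); split; first exact: p6m_mul.
  by rewrite app_comp.
case=> g [hg ->]; exists (acomp g (ainv f)); split; first by apply: p6m_mul => //; exact: p6m_inv.
by rewrite -app_comp acompA acompVl ?acompf1 //; exact: p6m_unit.
Qed.

Lemma induces_M f : M f -> induces f (@id (orbifold M)).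
Proof. move=> hf x; apply: sig_eq => /=; by rewrite orbit_app. Qed.

Lemma induces_id f (F : orbifold M -> orbifold M) : M f -> induces f F -> F = id.
Proof.
move=> hf hF; apply: functional_extensionality => -[P pf].
have [x ex] := pf; subst P.
have -> : exist _ (Defs.orbit M x) pf = cls M x by apply: sig_eq.
rewrite hF; symmetry; exact: (induces_M hf x).
Qed.

End Main3.
Unset Implicit Arguments.
Theorem lemma1 (R : realType) :
  (* Sym(M) = {idt} *)
  (forall F, Sym (@p6m R) F <-> F = id) /\
  (* Aff(M) = {idt} *)
  (forall F, Aff (@p6m R) F <-> F = id) /\
  (* Omega : Aff(M) -> Out(M), (a+A)_* |-> [g |-> (a+A) g (a+A)^-1],
     is well defined, *)
  (forall f1 f2 (F : orbifold (@p6m R) -> orbifold (@p6m R)), in_NA (@p6m R) f1 -> in_NA (@p6m R) f2 ->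
     induces f1 F -> induces f2 F ->
     out_eq (@p6m R) (conj f1) (conj f2)) /\
  (* a homomorphism, *)
  (forall f1 f2, in_NA (@p6m R) f1 -> in_NA (@p6m R) f2 ->
     out_eq (@p6m R) (conj (acomp f1 f2)) (fun g => conj f1 (conj f2 g))) /\
  (* injective, *)
  (forall f, in_NA (@p6m R) f -> out_eq (@p6m R) (conj f) id ->
     induces f (@id (orbifold (@p6m R)))) /\
  (* and surjective onto Out(M). *)
  (forall phi, is_aut (@p6m R) phi ->
     exists f, in_NA (@p6m R) f /\ out_eq (@p6m R) (conj f) phi).
Proof.
have NAu f : in_NA (@p6m R) f -> f.2 \in unitmx by case.
split.
  move=> F; split.
    by case=> f [nf [_ hf]]; apply: (induces_id (A_real nf) hf).
  move=> ->; exists (aid R); split; first exact: (p6m_NA p6m_aid).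
  split; first by rewrite /is_isometry /aid /= trmx1 mulmx1.
  exact: (induces_M p6m_aid).
split.
  move=> F; split.
    by case=> f [nf hf]; apply: (induces_id (A_real nf) hf).
  move=> ->; exists (aid R); split; first exact: (p6m_NA p6m_aid).
  exact: (induces_M p6m_aid).
split.
  move=> f1 f2 F n1 n2 _ _; exists (acomp f1 (ainv f2)); split.
    by apply: p6m_mul; [exact: A_real | apply: p6m_inv; exact: A_real].
  move=> g _; rewrite -conj_comp ?acomp_unit ?ainv_unit ?NAu //.
  by rewrite acompA acompVl ?NAu // acompf1.
split.
  move=> f1 f2 n1 n2; exists (aid R); split; first exact: p6m_aid.
  by move=> g _; rewrite conj_aid conj_comp ?NAu.
split.
  by move=> f nf _; exact: (induces_M (A_real nf)).
move=> phi /B_real [h hh Hh]; exists h; split; first exact: p6m_NA.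
exists (aid R); split; first exact: p6m_aid.
by move=> g hg; rewrite conj_aid Hh.
Qed.
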